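(* Let $\mathbb{K}$ be an algebraically closed field of characteristic $p$, with $p=0$ or $p>n$. If $(\Gamma_1,\Gamma_2,\Gamma_3)$ and $(\Sigma_1,\Sigma_2,\Sigma_3)$ are triangular dual $3$-nets of order $n$ in $PG(2,\mathbb{K})$ with $\Gamma_1=\Sigma_1$, then their associated triangles share the two vertices lying on their common side (the line containing $\Gamma_1=\Sigma_1$).
   Context: A dual $3$-net of order $n$ in $PG(2,\mathbb{K})$ is a triple of pairwise disjoint point sets, each of size $n$, such that every line meeting two distinct components meets each component in exactly one point. A dual $3$-net of order $n\ge4$ is triangular if its three components lie respectively on the three sides of a triangle; this (uniquely determined) triangle is called its associated triangle. *)

(* Defs.v *)
From HB Require Import structures.
From mathcomp Require Import all_boot all_order all_algebra.
Set Implicit Arguments. Unset Strict Implicit. Unset Printing Implicit Defensive.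
Import Order.TTheory GRing.Theory Num.Theory.
Local Open Scope ring_scope.

(* Model of PG(2,K): points and lines are nonzero row vectors of K^3,
   taken up to nonzero scalars; incidence is vanishing of the dot product. *)

Definition i0 : 'I_3 := @Ordinal 3 0 isT.
Definition i1 : 'I_3 := @Ordinal 3 1 isT.
Definition i2 : 'I_3 := @Ordinal 3 2 isT.

Section PG2.
Variable K : fieldType.
Implicit Types (u v x l : 'rV[K]_3) (s : seq 'rV[K]_3).

Definition incid l x : bool := \sum_(i < 3) l 0 i * x 0 i == 0.

Definition proj_eq u v : Prop := exists2 c : K, c != 0 & v = c *: u.

Definition proj_pointset s : Prop :=
  (forall x : 'rV[K]_3, x \in s -> x != 0) /\
  (forall i j, (i < size s)%N -> (j < size s)%N -> proj_eq s`_i s`_j -> i = j).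

Definition same_pointset (s t : seq 'rV[K]_3) : Prop :=
  (forall x : 'rV[K]_3, x \in s -> exists2 y : 'rV[K]_3, y \in t & proj_eq x y) /\
  (forall y : 'rV[K]_3, y \in t -> exists2 x : 'rV[K]_3, x \in s & proj_eq x y).

Definition dual_3net (n : nat) (G : 'I_3 -> seq 'rV[K]_3) : Prop :=
  [/\ forall k, size (G k) = n,
      forall k, proj_pointset (G k),
      forall i j, i != j -> forall x y : 'rV[K]_3, x \in G i -> y \in G j -> ~ proj_eq x y &
      forall l, l != 0 -> forall i j, i != j ->
        has (incid l) (G i) -> has (incid l) (G j) ->
        forall k, count (incid l) (G k) = 1%N].

(* L i is the side of a triangle containing G i: three nonzero, non-concurrent
   lines (det <> 0), the k-th containing the k-th component *)
Definition triangle_for (G : 'I_3 -> seq 'rV[K]_3) (L : 'I_3 -> 'rV[K]_3) : Prop :=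
  [/\ forall k, L k != 0,
      \det (\matrix_(i < 3, j < 3) L i 0 j) != 0 &
      forall k, all (incid (L k)) (G k)].

Definition triangular_dual_3net (n : nat) (G : 'I_3 -> seq 'rV[K]_3) : Prop :=
  [/\ (4 <= n)%N, dual_3net n G & exists L, triangle_for G L].

Definition vertex_on_side0 (L : 'I_3 -> 'rV[K]_3) v : bool :=
  incid (L i0) v && (incid (L i1) v || incid (L i2) v).

End PG2.

(* Main.v *)
Require Import Defs.
From HB Require Import structures.
From mathcomp Require Import all_boot all_order all_algebra.
From mathcomp Require Import ring zify.
Import GRing.Theory.
Set Implicit Arguments. Unset Strict Implicit. Unset Printing Implicit Defensive.
Local Open Scope ring_scope.


Definition dot (K : fieldType) (l x : 'rV[K]_3) : K := \sum_(i < 3) l 0 i * x 0 i.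

Lemma incidE (K : fieldType) (l x : 'rV[K]_3) : incid l x = (dot l x == 0).
Proof. by []. Qed.

Lemma dotD (K : fieldType) (l x y : 'rV[K]_3) : dot l (x + y) = dot l x + dot l y.
Proof. by rewrite /dot -big_split; apply: eq_bigr => i _; rewrite mxE mulrDr. Qed.

Lemma dotZ (K : fieldType) (l x : 'rV[K]_3) c : dot l (c *: x) = c * dot l x.
Proof. by rewrite /dot mulr_sumr; apply: eq_bigr => i _; rewrite mxE; ring. Qed.

Lemma dotB (K : fieldType) (l x y : 'rV[K]_3) : dot l (x - y) = dot l x - dot l y.
Proof. by rewrite dotD -scaleN1r dotZ; ring. Qed.

Lemma dotDl (K : fieldType) (l l' x : 'rV[K]_3) : dot (l + l') x = dot l x + dot l' x.
Proof. by rewrite /dot -big_split; apply: eq_bigr => i _; rewrite mxE mulrDl. Qed.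

Lemma dotZl (K : fieldType) (l x : 'rV[K]_3) c : dot (c *: l) x = c * dot l x.
Proof. by rewrite /dot mulr_sumr; apply: eq_bigr => i _; rewrite mxE; ring. Qed.

Lemma dot0l (K : fieldType) (x : 'rV[K]_3) : dot 0 x = 0.
Proof. by rewrite /dot big1 // => i _; rewrite mxE mul0r. Qed.

Lemma ord3 (i : 'I_3) : [\/ i = i0, i = i1 | i = i2].
Proof.
case: i => [[|[|[|m]]] Hm] //.
- by constructor 1; apply: val_inj.
- by constructor 2; apply: val_inj.
- by constructor 3; apply: val_inj.
Qed.
Lemma ord3_ijk (i j k m : 'I_3) : i != j -> i != k -> j != k ->
  [\/ m = i, m = j | m = k].
Proof.
move=> hij hik hjk.
case: (ord3 i) hij hik => -> hij hik; case: (ord3 j) hij hjk => -> hij hjk;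
case: (ord3 k) hik hjk => -> hik hjk; try by [];
case: (ord3 m) => ->; by [constructor 1|constructor 2|constructor 3].
Qed.

Definition Mof (K : fieldType) (L : 'I_3 -> 'rV[K]_3) : 'M[K]_3 :=
  \matrix_(i < 3, j < 3) L i 0 j.

Lemma frame_inj (K : fieldType) (L : 'I_3 -> 'rV[K]_3) (x : 'rV[K]_3) :
  \det (Mof L) != 0 -> (forall i, dot (L i) x = 0) -> x = 0.
Proof.
move=> hd hx.
have u : Mof L \in unitmx by rewrite unitmxE unitfE.
have h : Mof L *m x^T = 0.
  apply/matrixP => i j; rewrite !mxE (ord1 j) -[X in _ = X](hx i) /dot.
  by apply: eq_bigr => k _; rewrite !mxE.
have : x^T = 0 by rewrite -(mulKmx u x^T) h mulmx0.
by move=> /(congr1 trmx); rewrite trmxK trmx0.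
Qed.

Lemma frame_dual (K : fieldType) (L : 'I_3 -> 'rV[K]_3) :
  \det (Mof L) != 0 ->
  exists N : 'I_3 -> 'rV[K]_3, forall i j, dot (L i) (N j) = (i == j)%:R.
Proof.
move=> hd.
have u : Mof L \in unitmx by rewrite unitmxE unitfE.
exists (fun j => \row_k (invmx (Mof L)) k j) => i j.
have := mulmxV u; move=> /matrixP /(_ i j); rewrite !mxE => <-.
by apply: eq_bigr => k _; rewrite !mxE.
Qed.


Lemma on_side (K : fieldType) (G : 'I_3 -> seq 'rV[K]_3) L i x :
  triangle_for G L -> x \in G i -> dot (L i) x = 0.
Proof. by case=> _ _ h xi; apply/eqP; exact: (allP (h i)). Qed.

Lemma zero_ijk (K : fieldType) (L : 'I_3 -> 'rV[K]_3) (i j k : 'I_3) x :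
  \det (Mof L) != 0 -> i != j -> i != k -> j != k ->
  dot (L i) x = 0 -> dot (L j) x = 0 -> dot (L k) x = 0 -> x = 0.
Proof.
move=> hd hij hik hjk hi hj hk; apply: (frame_inj hd) => m.
by case: (ord3_ijk m hij hik hjk) => ->.
Qed.

Lemma single_prop (K : fieldType) (L : 'I_3 -> 'rV[K]_3) (i j k : 'I_3) x w :
  \det (Mof L) != 0 -> i != j -> i != k -> j != k -> x != 0 -> w != 0 ->
  dot (L j) x = 0 -> dot (L k) x = 0 -> dot (L j) w = 0 -> dot (L k) w = 0 ->
  proj_eq x w.
Proof.
move=> hd hij hik hjk x0 w0 xj xk wj wk.
have xi : dot (L i) x != 0.
  by apply/eqP => xi; move/eqP: x0; apply; apply: (zero_ijk hd hij hik hjk).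
have wi : dot (L i) w != 0.
  by apply/eqP => wi; move/eqP: w0; apply; apply: (zero_ijk hd hij hik hjk).
exists (dot (L i) w / dot (L i) x); first by rewrite mulf_neq0 ?invr_eq0.
apply/eqP; rewrite -subr_eq0; apply/eqP.
apply: (zero_ijk hd hij hik hjk); rewrite dotB dotZ.
- by rewrite divfK // subrr.
- by rewrite xj wj; ring.
- by rewrite xk wk; ring.
Qed.

Lemma mem_distinct (K : fieldType) (s : seq 'rV[K]_3) x y :
  proj_pointset s -> x \in s -> y \in s -> proj_eq x y -> x = y.
Proof.
case=> _ h xs ys pxy.
rewrite -(nth_index 0 xs) -(nth_index 0 ys).
have -> // : index x s = index y s.
apply: h; rewrite ?index_mem //.
by rewrite !nth_index.
Qed.

Lemma proj_eq_sym (K : fieldType) (x y : 'rV[K]_3) : proj_eq x y -> proj_eq y x.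
Proof.
case=> c c0 ->; exists c^-1; first by rewrite invr_eq0.
by rewrite scalerA mulVf // scale1r.
Qed.

Lemma nth01 (K : fieldType) n (G : 'I_3 -> seq 'rV[K]_3) k :
  dual_3net n G -> (1 < n)%N ->
  [/\ (G k)`_0 \in G k, (G k)`_1 \in G k & ~ proj_eq (G k)`_0 (G k)`_1].
Proof.
case=> hsz hps _ _ hn; split; rewrite ?mem_nth ?hsz //; first by apply: ltnW.
case: (hps k) => _ h /h; rewrite hsz => /(_ (ltnW hn) hn) //.
Qed.

Lemma pick_j (K : fieldType) n (G : 'I_3 -> seq 'rV[K]_3) L (i j k : 'I_3) :
  dual_3net n G -> triangle_for G L -> (1 < n)%N ->
  i != j -> i != k -> j != k ->
  exists2 z, z \in G k & dot (L j) z != 0.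
Proof.
move=> hnet htr hn hij hik hjk.
have [z0k z1k np] := nth01 k hnet hn.
case: (eqVneq (dot (L j) (G k)`_0) 0) => h0; last by exists (G k)`_0.
case: (eqVneq (dot (L j) (G k)`_1) 0) => h1; last by exists (G k)`_1.
exfalso; apply: np.
have hd : \det (Mof L) != 0 by case: htr.
case: hnet => _ hps _ _.
case: (hps k) => hnz _.
apply: (single_prop hd hij hik hjk (hnz _ z0k) (hnz _ z1k)) => //;
  exact: (on_side htr).
Qed.


Lemma comb_neq0 (K : fieldType) (L : 'I_3 -> 'rV[K]_3) (i j k : 'I_3) a b c :
  \det (Mof L) != 0 -> i != j -> i != k -> j != k -> c != 0 ->
  a *: L i + b *: L j + c *: L k != 0.
Proof.
move=> hd hij hik hjk c0; apply/eqP => l0.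
have [N hN] := frame_dual hd.
have := congr1 (fun l => dot l (N k)) l0; rewrite /= dot0l !dotDl !dotZl !hN.
rewrite eqxx (negbTE hik) (negbTE hjk) => /eqP; rewrite !mulr0 !add0r mulr1.
by rewrite (negbTE c0).
Qed.

Lemma nonvertex (K : fieldType) n (G : 'I_3 -> seq 'rV[K]_3) L (i j k : 'I_3) x :
  dual_3net n G -> triangle_for G L -> (1 < n)%N ->
  i != j -> i != k -> j != k -> x \in G i -> dot (L j) x != 0.
Proof.
move=> hnet htr hn hij hik hjk xi; apply/eqP => xj.
have hd : \det (Mof L) != 0 by case: htr.
have xi0 := on_side htr xi.
have [z zk zj] := pick_j hnet htr hn hij hik hjk.
have zk0 := on_side htr zk.
set l := 0 *: L k + (- dot (L i) z) *: L j + dot (L j) z *: L i.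
have hl : forall y, dot l y = dot (L j) z * dot (L i) y - dot (L i) z * dot (L j) y.
  by move=> y; rewrite !dotDl !dotZl; ring.
have l0 : l != 0.
  have := @comb_neq0 _ L k j i 0 (- dot (L i) z) (dot (L j) z) hd.
  rewrite eq_sym in hjk; rewrite eq_sym in hik; rewrite eq_sym in hij.
  by move=> /(_ hjk hik hij zj).
case: hnet => hsz hps hdisj hline.
have hx : has (incid l) (G i) by apply/hasP; exists x => //; rewrite incidE hl xi0 xj; apply/eqP; ring.
have hz : has (incid l) (G k) by apply/hasP; exists z => //; rewrite incidE hl; apply/eqP; ring.
have := hline l l0 i k hik hx hz j.
move=> /eqP; rewrite eqn_leq => /andP [_]; rewrite -has_count => /hasP [w wj].
rewrite incidE hl (on_side htr wj) mulr0 subr0 mulf_eq0 (negbTE zj) /= => /eqP wi.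
rewrite eq_sym in hik; rewrite eq_sym in hjk.
have := single_prop hd hik hjk hij _ _ xi0 xj wi (on_side htr wj).
case: (hps i) => nzi _; case: (hps j) => nzj _.
move=> /(_ (nzi _ xi) (nzj _ wj)); exact: (hdisj i j hij x w xi wj).
Qed.

Lemma collin (K : fieldType) n (G : 'I_3 -> seq 'rV[K]_3) L (i j k : 'I_3) x w :
  dual_3net n G -> triangle_for G L -> (1 < n)%N ->
  i != j -> i != k -> j != k -> x \in G i -> w \in G j ->
  exists2 z, z \in G k &
    dot (L j) x * dot (L k) w * dot (L i) z + dot (L k) x * dot (L i) w * dot (L j) z = 0.
Proof.
move=> hnet htr hn hij hik hjk xi wj.
have hd : \det (Mof L) != 0 by case: htr.
have xj := nonvertex hnet htr hn hij hik hjk xi.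
have wi : dot (L i) w != 0.
  by apply: (nonvertex hnet htr hn _ hjk hik wj); rewrite eq_sym.
set l := (- (dot (L j) x * dot (L k) w)) *: L i + (- (dot (L k) x * dot (L i) w)) *: L j
   + (dot (L j) x * dot (L i) w) *: L k.
have hl : forall y, dot l y = - (dot (L j) x * dot (L k) w) * dot (L i) y
   - (dot (L k) x * dot (L i) w) * dot (L j) y + (dot (L j) x * dot (L i) w) * dot (L k) y.
  by move=> y; rewrite !dotDl !dotZl; ring.
have l0 : l != 0 by apply: comb_neq0 => //; rewrite mulf_neq0.
case: hnet => hsz hps hdisj hline.
have hx : has (incid l) (G i).
  by apply/hasP; exists x => //; rewrite incidE hl (on_side htr xi); apply/eqP; ring.
have hw : has (incid l) (G j).
  by apply/hasP; exists w => //; rewrite incidE hl (on_side htr wj); apply/eqP; ring.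
have := hline l l0 i j hij hx hw k.
move=> /eqP; rewrite eqn_leq => /andP [_]; rewrite -has_count => /hasP [z zk].
rewrite incidE hl (on_side htr zk) => /eqP hz; exists z => //.
by rewrite -[LHS]opprK -[RHS]oppr0 -hz; ring.
Qed.


Lemma prod_scale (K : fieldType) (r : K) (A : seq K) :
  \prod_(x <- A) (r * x) = r ^+ size A * \prod_(x <- A) x.
Proof.
elim: A => [|a A IH]; first by rewrite !big_nil expr0 mulr1.
by rewrite !big_cons IH /= exprS; ring.
Qed.

Lemma coset_pow (K : fieldType) (A : seq K) a0 :
  uniq A -> a0 \in A -> (forall x, x \in A -> x != 0) ->
  (forall a x, a \in A -> x \in A -> a * x / a0 \in A) ->
  forall a, a \in A -> a ^+ size A = a0 ^+ size A.
Proof.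
move=> uA a0A nz cl a aA.
set r := a / a0.
have a00 := nz _ a0A.
have r0 : r != 0 by rewrite mulf_neq0 ?invr_eq0 ?nz.
have sub : {subset map (fun x => r * x) A <= A}.
  by move=> y /mapP [x xA ->]; rewrite /r mulrAC; apply: cl.
have um : uniq (map (fun x => r * x) A).
  by rewrite map_inj_in_uniq // => x y _ _; apply: mulfI.
have hsz : (size A <= size (map (fun x => (r * x)%R) A))%N by rewrite size_map.
have [_ eqm] := uniq_min_size um sub hsz.
have pe := uniq_perm um uA eqm.
have e : \prod_(x <- A) (r * x) = \prod_(x <- A) x.
  transitivity (\prod_(x <- map (fun x => r * x) A) x); first by rewrite big_map.
  exact: perm_big.
rewrite prod_scale in e.
have p0 : \prod_(x <- A) x != 0.
  by rewrite prodf_seq_neq0; apply/allP => x xA; apply: nz.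
have h : r ^+ size A = 1 by apply: (mulIf p0); rewrite mul1r.
move: h; rewrite /r expr_div_n => h.
have e0 : a0 ^+ size A != 0 by rewrite expf_neq0.
by rewrite -(divfK e0 (a ^+ size A)) h mul1r.
Qed.

Lemma chain (K : fieldType) (a a' a'' a3 b b' c c' : K) :
  b != 0 -> b' != 0 -> c != 0 -> c' != 0 ->
  a'' * b * c = -1 -> a' * b' * c = -1 -> a * b' * c' = -1 -> a3 * b * c' = -1 ->
  a3 = a * a'' / a'.
Proof.
move=> b0 b'0 c0 c'0 e1 e2 e3 e4.
have sol : forall (t u v : K), u != 0 -> v != 0 -> t * u * v = -1 -> t = - (u * v)^-1.
  move=> t u v u0 v0 e.
  by rewrite -[t](mulfK (mulf_neq0 u0 v0)) mulrA e mulN1r.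
rewrite (sol _ _ _ b0 c'0 e4) (sol _ _ _ b'0 c'0 e3) (sol _ _ _ b0 c0 e1) (sol _ _ _ b'0 c0 e2).
by field; rewrite c0 b'0 b0 c'0 oppr_eq0 oner_eq0.
Qed.

Lemma kernel2 (K : fieldType) (p q r s : K) : p * s - q * r = 0 ->
  exists m1, exists m2, [/\ (m1 != 0) || (m2 != 0), p * m1 + q * m2 = 0 & r * m1 + s * m2 = 0].
Proof.
move=> h.
case: (boolP ((p != 0) || (q != 0))) => hpq.
  exists q, (- p); split; first by rewrite oppr_eq0 orbC.
  - by ring.
  - by rewrite -[RHS]oppr0 -h; ring.
move: hpq; rewrite negb_or !negbK => /andP [/eqP p0 /eqP q0].
case: (boolP ((r != 0) || (s != 0))) => hrs.
  exists s, (- r); split; first by rewrite oppr_eq0 orbC.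
  - by rewrite p0 q0; ring.
  - by ring.
move: hrs; rewrite negb_or !negbK => /andP [/eqP r0 /eqP s0].
exists 1, 0; split; rewrite ?oner_eq0 //; rewrite ?p0 ?q0 ?r0 ?s0; ring.
Qed.

Lemma natf_ne0 (K : fieldType) (n m : nat) :
  (forall p : nat, p \in [pchar K] -> (n < p)%N) -> (0 < m)%N ->
  (forall p, prime p -> (p %| m)%N -> (p <= n)%N) -> m%:R != 0 :> K.
Proof.
move=> hc m0 hp; apply/negP => /eqP hm.
have [p pc] := natf0_pchar m0 (introT eqP hm).
have pm : (p %| m)%N by rewrite (dvdn_pcharf pc) hm.
have := hp p (pcharf_prime pc) pm; have := hc p pc.
by move=> h1; rewrite leqNgt h1.
Qed.


Lemma alg (K : fieldType) n (A : seq K) al be p q r s :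
  (2 < n)%N -> n%:R != 0 :> K -> 'C(n, 2)%:R != 0 :> K -> uniq A -> size A = n ->
  be != 0 ->
  (forall a, a \in A -> a ^+ n = al) ->
  (forall a, a \in A -> (r + s * a) ^+ n = be * (p + q * a) ^+ n) ->
  p * s - q * r != 0 ->
  (p = 0 \/ r = 0) /\ (q = 0 \/ s = 0).
Proof.
move=> hn hn0 hc2 uA sA be0 hal hrs det.
pose c k := 'C(n, k)%:R * (r ^+ (n - k) * s ^+ k - be * (p ^+ (n - k) * q ^+ k)).
pose H := \poly_(k < n) c k + (c n * al)%:P.
have expand : forall a, \sum_(k < n.+1) c k * a ^+ k = (r + s * a) ^+ n - be * (p + q * a) ^+ n.
  move=> a; rewrite !exprDn mulr_sumr -sumrB; apply: eq_bigr => i _.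
  rewrite /c mulr_natl !exprMn.
  move: (r ^+ (n - i)) (p ^+ (n - i)) (s ^+ i) (q ^+ i) (a ^+ i) ('C(n, i)) => X1 X2 X3 X4 X5 C.
  ring.
have Hroot : forall a, a \in A -> H.[a] = 0.
  move=> a aA; rewrite hornerD horner_poly hornerC -(hal a aA).
  have e := expand a; rewrite hrs // subrr big_ord_recr /= in e.
  exact: e.
have H0 : H = 0.
  apply/eqP; apply: contraT => Hn0.
  have hall : all (root H) A by apply/allP => a aA; apply/rootP; exact: Hroot.
  have := max_poly_roots Hn0 hall uA; rewrite sA.
  have : (size H <= n)%N.
    apply: leq_trans (size_polyD _ _) _; rewrite geq_max size_poly size_polyC.
    by case: (_ != 0) => //=; lia.
  by move=> h1 h2; have := leq_ltn_trans h1 h2; rewrite ltnn.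
have c1 : c 1%N = 0.
  have := congr1 (fun P : {poly K} => P`_1) H0; rewrite coefD coef_poly coefC coef0 /=.
  by rewrite (ltn_trans _ hn) // addr0.
have c2 : c 2%N = 0.
  have := congr1 (fun P : {poly K} => P`_2) H0; rewrite coefD coef_poly coefC coef0 /=.
  by rewrite hn addr0.
move: c1 c2; rewrite /c bin1.
move=> /eqP; rewrite mulf_eq0 (negbTE hn0) /= subr_eq0 => /eqP E1.
move=> /eqP; rewrite mulf_eq0 (negbTE hc2) /= subr_eq0 => /eqP E2.
have [m hm] : exists m, n = m.+2 by exists (n - 2)%N; lia.
rewrite (_ : (n - 1 = m.+1)%N) in E1; last by lia.
rewrite (_ : (n - 2 = m)%N) in E2; last by lia.
case: (eqVneq r 0) => r0.
  split; first by right.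
  left; move: E1; rewrite r0 expr0n /= mul0r => /esym /eqP.
  rewrite !mulf_eq0 (negbTE be0) /= expf_eq0 /=.
  have p0 : p != 0 by apply: contraNneq det => ->; rewrite r0; apply/eqP; ring.
  by rewrite (negbTE p0) /= => /eqP.
case: (eqVneq s 0) => s0.
  split; last by right.
  left; move: E1; rewrite s0 mulr0 => /esym /eqP.
  rewrite !mulf_eq0 (negbTE be0) /= expf_eq0 /=.
  have q0 : q != 0 by apply: contraNneq det => ->; rewrite s0; apply/eqP; ring.
  by rewrite (negbTE q0) orbF => /eqP.
exfalso.
have key : r ^+ m * s * (r * q - s * p) = 0.
  transitivity (q * (r ^+ m.+1 * s) - p * (r ^+ m * s ^+ 2)); first by rewrite exprS; ring.
  by rewrite E1 E2 exprS; ring.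
move/eqP: key; rewrite !mulf_eq0 expf_eq0 (negbTE r0) (negbTE s0) andbF /=.
rewrite subr_eq0 => /eqP e; move/eqP: det; apply.
by rewrite (mulrC q r) e; ring.
Qed.


Lemma ratio (K : fieldType) (x1 x2 w0 w2 z0 z1 : K) :
  x1 != 0 -> w2 != 0 -> z0 != 0 -> x1 * w2 * z0 + x2 * w0 * z1 = 0 ->
  (x2 / x1) * (w0 / w2) * (z1 / z0) = -1.
Proof.
move=> h1 h2 h3 e.
have e' : x2 * w0 * z1 = - (x1 * w2 * z0) by rewrite -[RHS]add0r -e; ring.
transitivity ((x2 * w0 * z1) / (x1 * w2 * z0)); first by field; rewrite h1 h2 h3.
by rewrite e' mulNr divff // !mulf_neq0.
Qed.

Lemma uniq_pp (K : fieldType) (s : seq 'rV[K]_3) : proj_pointset s -> uniq s.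
Proof.
case=> _ h; apply/(uniqP 0) => i j hi hj e; apply: h => //.
by exists 1; rewrite ?oner_eq0 // scale1r e.
Qed.

Lemma par_inj (K : fieldType) n (G : 'I_3 -> seq 'rV[K]_3) L :
  dual_3net n G -> triangle_for G L -> (1 < n)%N ->
  {in G i0 &, injective (fun y => dot (L i2) y / dot (L i1) y)}.
Proof.
move=> hnet htr hn.
have hd : \det (Mof L) != 0 by case: htr.
have nv := nonvertex hnet htr hn.
case: (hnet) => hsz hps _ _.
  move=> x x' xG x'G e.
  apply: (mem_distinct (hps i0) xG x'G).
  have x1 := nv i0 i1 i2 x isT isT isT xG.
  have x'1 := nv i0 i1 i2 x' isT isT isT x'G.
  exists (dot (L i1) x' / dot (L i1) x); first by rewrite mulf_neq0 ?invr_eq0.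
  apply/eqP; rewrite -subr_eq0; apply/eqP.
  apply: (zero_ijk hd (isT : i0 != i1) (isT : i0 != i2) (isT : i1 != i2));
    rewrite dotB dotZ.
  - by rewrite (on_side htr xG) (on_side htr x'G); ring.
  - by rewrite divfK // subrr.
  - move: e => /= e.
    have -> : dot (L i2) x' = dot (L i2) x / dot (L i1) x * dot (L i1) x'.
      by rewrite e divfK.
    by field.
Qed.

Lemma par_uniq (K : fieldType) n (G : 'I_3 -> seq 'rV[K]_3) L :
  dual_3net n G -> triangle_for G L -> (1 < n)%N ->
  uniq (map (fun y => dot (L i2) y / dot (L i1) y) (G i0)).
Proof.
move=> hnet htr hn; rewrite map_inj_in_uniq; last exact: (par_inj hnet htr hn).
by case: hnet => _ hps _ _; apply: uniq_pp.
Qed.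

Lemma coset_net (K : fieldType) n (G : 'I_3 -> seq 'rV[K]_3) L :
  dual_3net n G -> triangle_for G L -> (1 < n)%N ->
  forall x, x \in G i0 ->
  (dot (L i2) x / dot (L i1) x) ^+ n =
  (dot (L i2) (G i0)`_0 / dot (L i1) (G i0)`_0) ^+ n.
Proof.
move=> hnet htr hn.
have hd : \det (Mof L) != 0 by case: htr.
pose f i y := dot (L i) y.
pose par y := f i2 y / f i1 y.
pose pb y := f i0 y / f i2 y.
pose pc y := f i1 y / f i0 y.
have nv := nonvertex hnet htr hn.
have rel : forall x w z, x \in G i0 -> w \in G i1 -> z \in G i2 ->
    f i1 x * f i2 w * f i0 z + f i2 x * f i0 w * f i1 z = 0 ->
    par x * pb w * pc z = -1.
  move=> x w z xG wG zG e; apply: ratio => //.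
  - exact: (nv i0 i1 i2).
  - exact: (nv i1 i2 i0).
  - exact: (nv i2 i0 i1).
have pbnz : forall w, w \in G i1 -> pb w != 0.
  by move=> w wG; rewrite mulf_neq0 ?invr_eq0 //; [exact: (nv i1 i0 i2)|exact: (nv i1 i2 i0)].
have pcnz : forall z, z \in G i2 -> pc z != 0.
  by move=> z zG; rewrite mulf_neq0 ?invr_eq0 //; [exact: (nv i2 i1 i0)|exact: (nv i2 i0 i1)].
have panz : forall x, x \in G i0 -> par x != 0.
  by move=> x xG; rewrite mulf_neq0 ?invr_eq0 //; [exact: (nv i0 i2 i1)|exact: (nv i0 i1 i2)].
have cl : forall x x' x'', x \in G i0 -> x' \in G i0 -> x'' \in G i0 ->
    exists2 x3, x3 \in G i0 & par x3 = par x * par x'' / par x'.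
  move=> x x' x'' xG x'G x''G.
  have [w0G _ _] := nth01 i1 hnet hn.
  set w := (G i1)`_0 in w0G.
  have [z zG e1] := @collin _ _ _ _ i0 i1 i2 _ _ hnet htr hn isT isT isT x''G w0G.
  have [w' w'G e2] := @collin _ _ _ _ i0 i2 i1 _ _ hnet htr hn isT isT isT x'G zG.
  have [z' z'G e3] := @collin _ _ _ _ i0 i1 i2 _ _ hnet htr hn isT isT isT xG w'G.
  have [x3 x3G e4] := @collin _ _ _ _ i1 i2 i0 _ _ hnet htr hn isT isT isT w0G z'G.
  exists x3 => //.
  apply: (@chain _ (par x) (par x') (par x'') (par x3) (pb w) (pb w') (pc z) (pc z'));
    rewrite ?pbnz ?pcnz //; apply: rel => //.
  - by rewrite -[RHS]e2 /f; ring.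
  - by rewrite -[RHS]e4 /f; ring.
have [x0G x1G _] := nth01 i0 hnet hn.
case: (hnet) => hsz hps _ _.
set A := map par (G i0).
have uA : uniq A by exact: (par_uniq hnet htr hn).
have a0A : par (G i0)`_0 \in A by apply: map_f.
have := @coset_pow _ A (par (G i0)`_0) uA a0A.
rewrite size_map hsz => h x xG.
apply: h; last by apply: map_f.
- by move=> y /mapP [x' x'G ->]; apply: panz.
- move=> a y /mapP [x' x'G ->] /mapP [x'' x''G ->].
  have [x3 x3G <-] := cl x' _ x'' x'G x0G x''G.
  by apply: map_f.
Qed.


Lemma char_facts (K : fieldType) n :
  (forall p : nat, p \in [pchar K] -> (n < p)%N) -> (2 < n)%N ->
  n%:R != 0 :> K /\ 'C(n, 2)%:R != 0 :> K.
Proof.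
move=> hc hn; split.
  apply: (natf_ne0 hc); first by lia.
  by move=> p _ pn; apply: dvdn_leq => //; lia.
apply: (natf_ne0 hc); first by rewrite bin_gt0; lia.
move=> p pp pd.
have : (p %| n * n.-1)%N.
  have e := mul_bin_diag n 1; rewrite bin1 in e.
  by rewrite e; apply: dvdn_mull.
rewrite Euclid_dvdM // => /orP [] h.
  by apply: dvdn_leq => //; lia.
have : (p <= n.-1)%N by apply: dvdn_leq => //; lia.
lia.
Qed.

Lemma dir (K : fieldType) n (G S : 'I_3 -> seq 'rV[K]_3) LG LS :
  (forall p : nat, p \in [pchar K] -> (n < p)%N) -> (4 <= n)%N ->
  dual_3net n G -> dual_3net n S -> same_pointset (G i0) (S i0) ->
  triangle_for G LG -> triangle_for S LS ->
  forall v, vertex_on_side0 LG v -> vertex_on_side0 LS v.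
Proof.
move=> hc hn4 hnetG hnetS hsame htrG htrS v.
have hn : (1 < n)%N by lia.
have hd : \det (Mof LG) != 0 by case: htrG.
have hdS : \det (Mof LS) != 0 by case: htrS.
have [N hN] := frame_dual hd.
pose f i y := dot (LG i) y.
pose g i y := dot (LS i) y.
have decomp : forall x, f i0 x = 0 -> x = f i1 x *: N i1 + f i2 x *: N i2.
  move=> x hx; apply/eqP; rewrite -subr_eq0; apply/eqP; apply: (frame_inj hd) => m.
  rewrite dotB dotD !dotZ !hN.
  by case: (ord3 m) => -> /=; rewrite /f in hx; rewrite ?hx /f; ring.
have gdec : forall x m, f i0 x = 0 -> g m x = f i1 x * g m (N i1) + f i2 x * g m (N i2).
  by move=> x m hx; rewrite /g {1}(decomp x hx) dotD !dotZ.
have fN : forall i j, f i (N j) = (i == j)%:R by move=> i j; exact: hN.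
have gG0 : forall x, x \in G i0 -> g i0 x = 0.
  move=> x xG; case: hsame => [/(_ x xG) [y yS [c c0 ey]] _].
  have := on_side htrS yS; rewrite ey dotZ => /eqP; rewrite mulf_eq0 (negbTE c0) /=.
  by move/eqP.
have nvG := nonvertex hnetG htrG hn.
have nvS := nonvertex hnetS htrS hn.
have [x0G x1G np] := nth01 i0 hnetG hn.
move: x0G x1G np; set x := (G i0)`_0; set x' := (G i0)`_1 => x0G x1G np.
have fx0 := on_side htrG x0G; have fx'0 := on_side htrG x1G.
have x1 := nvG i0 i1 i2 x isT isT isT x0G.
have x'1 := nvG i0 i1 i2 x' isT isT isT x1G.
have D : f i1 x * f i2 x' - f i2 x * f i1 x' != 0.
  apply/eqP => e; apply: np.
  exists (f i1 x' / f i1 x); first by rewrite mulf_neq0 ?invr_eq0.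
  apply/eqP; rewrite -subr_eq0; apply/eqP.
  apply: (zero_ijk hd (isT : i0 != i1) (isT : i0 != i2) (isT : i1 != i2));
    rewrite dotB dotZ.
  - by rewrite fx0 fx'0; ring.
  - by rewrite divfK // subrr.
  - have -> : dot (LG i2) x' = f i2 x * f i1 x' / f i1 x.
      by move/eqP: e; rewrite subr_eq0 => /eqP <-; rewrite /f; field.
    by rewrite /f; field.
have u0 : g i0 (N i1) = 0 /\ g i0 (N i2) = 0.
  have e1 := gdec x i0 fx0; rewrite gG0 // in e1.
  have e2 := gdec x' i0 fx'0; rewrite gG0 // in e2.
  split.
    have : g i0 (N i1) * (f i1 x * f i2 x' - f i2 x * f i1 x') = 0.
      transitivity (f i2 x' * (f i1 x * g i0 (N i1) + f i2 x * g i0 (N i2))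
        - f i2 x * (f i1 x' * g i0 (N i1) + f i2 x' * g i0 (N i2))); first by ring.
      by rewrite -e1 -e2; ring.
    by move/eqP; rewrite mulf_eq0 (negbTE D) orbF => /eqP.
  have : g i0 (N i2) * (f i1 x * f i2 x' - f i2 x * f i1 x') = 0.
    transitivity (f i1 x * (f i1 x' * g i0 (N i1) + f i2 x' * g i0 (N i2))
        - f i1 x' * (f i1 x * g i0 (N i1) + f i2 x * g i0 (N i2))); first by ring.
    by rewrite -e1 -e2; ring.
  by move/eqP; rewrite mulf_eq0 (negbTE D) orbF => /eqP.
have g0v : forall y, f i0 y = 0 -> g i0 y = 0.
  by move=> y hy; rewrite gdec // (proj1 u0) (proj2 u0); ring.
set p := g i1 (N i1); set q := g i1 (N i2); set r := g i2 (N i1); set s := g i2 (N i2).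
have detS : p * s - q * r != 0.
  apply/eqP => /kernel2 [m1 [m2 [hm e1 e2]]].
  set z := m1 *: N i1 + m2 *: N i2.
  have fz0 : f i0 z = 0 by rewrite /f dotD !dotZ !hN /=; ring.
  have z0 : z = 0.
    apply: (frame_inj hdS) => m; change (g m z = 0); case: (ord3 m) => ->.
    - exact: g0v.
    - by rewrite gdec // /z /f !dotD !dotZ !hN /=; rewrite -[RHS]e1 /p /q /g; ring.
    - by rewrite gdec // /z /f !dotD !dotZ !hN /=; rewrite -[RHS]e2 /r /s /g; ring.
  have h1 : f i1 z = m1 by rewrite /z /f dotD !dotZ !hN /=; ring.
  have h2 : f i2 z = m2 by rewrite /z /f dotD !dotZ !hN /=; ring.
  move: hm; rewrite -h1 -h2 z0 /f /dot.
  by rewrite !big1 ?eqxx // => i _; rewrite mxE mulr0.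
pose par y := f i2 y / f i1 y.
set A := map par (G i0).
have uA : uniq A by exact: (par_uniq hnetG htrG hn).
have sA : size A = n by rewrite size_map; case: hnetG.
have hal : forall a, a \in A -> a ^+ n = par x ^+ n.
  by move=> a /mapP [y yG ->]; exact: (coset_net hnetG htrG hn yG).
have [y0S _ _] := nth01 i0 hnetS hn.
set be := (g i2 (S i0)`_0 / g i1 (S i0)`_0) ^+ n.
have be0 : be != 0.
  rewrite expf_neq0 // mulf_neq0 ?invr_eq0 //.
  - exact: (nvS i0 i2 i1).
  - exact: (nvS i0 i1 i2).
have hbe : forall y, y \in S i0 -> (g i2 y / g i1 y) ^+ n = be.
  by move=> y yS; exact: (coset_net hnetS htrS hn yS).
have hrs : forall a, a \in A -> (r + s * a) ^+ n = be * (p + q * a) ^+ n.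
  move=> a /mapP [y yG ->].
  have [z zS [c c0 ez]] := (proj1 hsame) y yG.
  have g1z := nvS i0 i1 i2 z isT isT isT zS.
  have g1y : g i1 y != 0.
    by move: g1z; rewrite ez dotZ mulf_eq0 (negbTE c0).
  have fy0 := on_side htrG yG.
  have y1 := nvG i0 i1 i2 y isT isT isT yG.
  have e1 : r + s * par y = g i2 y / f i1 y.
    by rewrite (gdec y i2 fy0) /par /r /s; field.
  have e2 : p + q * par y = g i1 y / f i1 y.
    by rewrite (gdec y i1 fy0) /par /p /q; field.
  rewrite e1 e2 -(hbe z zS) ez /g !dotZ -exprMn; congr (_ ^+ n).
  by field; rewrite c0 y1 g1y.
have hn2 : (2 < n)%N by lia.
have [hn0 hc2] := char_facts hc hn2.
have [hpr hqs] := alg hn2 hn0 hc2 uA sA be0 hal hrs detS.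
rewrite /vertex_on_side0 !incidE => /andP [/eqP v0 v12].
have gv : forall m, dot (LS m) v = f i1 v * g m (N i1) + f i2 v * g m (N i2).
  by move=> m; apply: gdec.
have := g0v v v0; rewrite /g => ->; rewrite eqxx /= !gv.
case/orP: v12 => /eqP v12; rewrite /f in v12 *; rewrite v12 !mul0r ?add0r ?addr0.
- by case: hqs => h; rewrite -/q -/s h mulr0 eqxx ?orbT.
- by case: hpr => h; rewrite -/p -/r h mulr0 eqxx ?orbT.
Qed.

Lemma same_sym (K : fieldType) (s t : seq 'rV[K]_3) : same_pointset s t -> same_pointset t s.
Proof.
case=> h1 h2; split.
- by move=> y /h2 [x xs e]; exists x => //; apply: proj_eq_sym.
- by move=> x /h1 [y yt e]; exists y => //; apply: proj_eq_sym.
Qed.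

Theorem proposition4p8 (K : closedFieldType) (n : nat)
  (G S : 'I_3 -> seq 'rV[K]_3) :
  (forall p : nat, p \in [pchar K] -> (n < p)%N) ->
  triangular_dual_3net n G ->
  triangular_dual_3net n S ->
  same_pointset (G i0) (S i0) ->
  forall LG LS : 'I_3 -> 'rV[K]_3,
    triangle_for G LG -> triangle_for S LS ->
    forall v : 'rV[K]_3, v != 0 ->
      vertex_on_side0 LG v = vertex_on_side0 LS v.
Proof.
move=> hc [hn hG _] [_ hS _] hsame LG LS tG tS v _.
apply/idP/idP.
- exact: (dir hc hn hG hS hsame tG tS).
- exact: (dir hc hn hS hG (same_sym hsame) tS tG).
Qed.
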